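(* Assume Schinzel's Hypothesis H. Let $p$ be a prime with $p\equiv 1\pmod 8$ and $p\equiv 2\pmod 3$, and let $\mathfrak{C}_p$ be the set of septuples $(A,B,C,D,E,F,G)\in\mathbb{Z}^7$ of the parametrized form described below that satisfy (A1), (A3), (A4), (A5), (A7), and (A6) for every integer $n\ge1$. Then for every positive integer $n$ there exist infinitely many septuples in $\mathfrak{C}_p$ satisfying Hypothesis FM with respect to $(p,n)$. Parametrized form: there are nonzero odd integers $\lambda,\gamma$ with $\gcd(\lambda,3\gamma)=\gcd(p,3\gamma)=\gcd(p,\lambda)=1$, nonzero integers $\epsilon_0,\delta_0$ with $p\lambda^2\epsilon_0+9\gamma^2\delta_0=1$, and integers $\mu,t_0,F_0$ with $A=\frac{p\lambda^2-9\gamma^2}{2}$, $B=2pF_0^2(\delta_0-\epsilon_0-\mu(p\lambda^2+9\gamma^2))+(p\lambda^2+9\gamma^2)t_0F_0$, $C=2pF_0^2(\delta_0+\epsilon_0-\mu(p\lambda^2-9\gamma^2))+(p\lambda^2-9\gamma^2)t_0F_0$, $D=\frac{p\lambda^2+9\gamma^2}{2}$, $E=F_0(2pF_0(\epsilon_0+9\mu\gamma^2)-9\gamma^2t_0)(2F_0(\delta_0-p\mu\lambda^2)+\lambda^2t_0)$, $F=2F_0$, $G=3\lambda\gamma$.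
   Context: Schinzel's Hypothesis H: if $F_1,\dots,F_k\in\mathbb{Z}[x]$ are nonconstant, irreducible over $\mathbb{Q}$, with positive leading coefficients, and the product $\prod_i F_i$ has no fixed prime divisor (no prime $q$ divides $\prod_iF_i(m)$ for all integers $m$), then there are infinitely many positive integers $x$ such that $F_1(x),\dots,F_k(x)$ are simultaneously prime. $v_l$ is the $l$-adic valuation. Conditions on $(A,B,C,D,E,F,G)\in\mathbb{Z}^7$ (for a prime $p\equiv1\pmod 8$ and integer $n\ge1$): (A1) $B^2 - C^2 + 2pEF = 0$, $2AB - 2CD + pF^2 = 0$, $A^2 - D^2 + pG^2 = 0$; (A2) for every odd prime $l$ with $l\ne 3$, $l\ne p$, $l\mid E$: $p$ is a square in $\mathbb{Q}_l^\times$ or $v_l(E)-v_l(G)<6n$; (A3) $\gcd(A,D,G)=1$, $E\not\equiv 0 \pmod p$, $G\not\equiv 0\pmod p$; (A4) for every odd prime $l$ with $l\ne 3$, $l\ne p$, $l \mid \gcd(AC-BD,\ DE-CF,\ AE-BF)$: $p$ is a square in $\mathbb{Q}_l^\times$; (A5) there is an integer $H$ with $G - EH^6\equiv 0 \pmod p$ such that $A+\zeta BH^4$ is a quadratic non-residue in $\mathbb{F}_p^\times$ for every cube root of unity $\zeta\in\mathbb{F}_p^\times$; (A6) $v_3(E)-v_3(G)<6n$; (A7) $A+B\not\equiv 0\pmod 3$ and $G\equiv 0 \pmod 3$. The septuple (not all zero) satisfies Hypothesis FM with respect to $(p,n)$ if (A1)–(A5) hold and, in case $3$ is a quadratic non-residue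 in $\mathbb{F}_p^\times$, also (A6) and (A7). *)

(* Defs.v *)
From HB Require Import structures.
From mathcomp Require Import all_boot all_order all_algebra.
Set Implicit Arguments. Unset Strict Implicit. Unset Printing Implicit Defensive.
Import Order.TTheory GRing.Theory Num.Theory.
Local Open Scope ring_scope.

(* l-adic valuation of an integer (v_l(0) is set to 0; only used on nonzero
   integers in the statement, since (A3) forces E, G <> 0). *)
Definition vZ (l : nat) (a : int) : int := (logn l (absz a))%:Z.

(* "a is a square in Q_l^x", for a prime l and an integer a:
   a <> 0 and a is l-adically approximable by squares of l-adic units
   times a, i.e. for every m there are integers x, y with l not dividing y
   and x^2 = a y^2 mod l^m (equivalently a = y'^2 in Q_l, by density of
   Z_(l) and Hensel). *)
Definition sqQl (l : nat) (a : int) : Prop :=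
  a != 0 /\ forall m : nat, exists x y : int,
    ~~ (l%:Z %| y)%Z /\ ((l ^ m)%N%:Z %| x ^+ 2 - a * y ^+ 2)%Z.

Definition qnrFp (p : nat) (x : 'F_p) : Prop :=
  x != 0 /\ ~ (exists y : 'F_p, y ^+ 2 = x).

Definition A1 (A B C D E F G : int) (p : nat) : Prop :=
  [/\ B ^+ 2 - C ^+ 2 + 2 * p%:Z * E * F = 0,
      2 * A * B - 2 * C * D + p%:Z * F ^+ 2 = 0 &
      A ^+ 2 - D ^+ 2 + p%:Z * G ^+ 2 = 0].

Definition A2 (A B C D E F G : int) (p n : nat) : Prop :=
  forall l : nat, prime l -> odd l -> l != 3%N -> l != p ->
    (l%:Z %| E)%Z -> sqQl l p%:Z \/ vZ l E - vZ l G < (6 * n)%N%:Z.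

Definition A3 (A B C D E F G : int) (p : nat) : Prop :=
  [/\ gcdz (gcdz A D) G = 1, ~~ (p%:Z %| E)%Z & ~~ (p%:Z %| G)%Z].

Definition A4 (A B C D E F G : int) (p : nat) : Prop :=
  forall l : nat, prime l -> odd l -> l != 3%N -> l != p ->
    (l%:Z %| gcdz (gcdz (A * C - B * D) (D * E - C * F)) (A * E - B * F))%Z ->
    sqQl l p%:Z.

Definition A5 (A B C D E F G : int) (p : nat) : Prop :=
  exists H : int, (p%:Z %| G - E * H ^+ 6)%Z /\
    forall zeta : 'F_p, zeta ^+ 3 = 1 ->
      qnrFp ((A%:~R : 'F_p) + zeta * (B%:~R : 'F_p) * (H%:~R : 'F_p) ^+ 4).

Definition A6 (A B C D E F G : int) (n : nat) : Prop :=
  vZ 3 E - vZ 3 G < (6 * n)%N%:Z.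

Definition A7 (A B C D E F G : int) : Prop :=
  ~~ (3 %| A + B)%Z /\ (3 %| G)%Z.

Definition septuple := (int * int * int * int * int * int * int)%type.

Definition HypFM (p n : nat) (s : septuple) : Prop :=
  let: (A, B, C, D, E, F, G) := s in
  [/\ ~ [/\ [/\ A = 0, B = 0, C = 0 & D = 0], E = 0, F = 0 & G = 0],
      [/\ A1 A B C D E F G p, A2 A B C D E F G p n & A3 A B C D E F G p],
      A4 A B C D E F G p, A5 A B C D E F G p &
      (qnrFp (3%:R : 'F_p) -> A6 A B C D E F G n /\ A7 A B C D E F G)].

Definition param_form (p : nat) (s : septuple) : Prop :=
  let: (A, B, C, D, E, F, G) := s in
  let P := p%:Z in
  exists lam gam eps0 del0 mu t0 F0 : int,
  [/\ [/\ lam != 0, gam != 0, odd (absz lam) & odd (absz gam)],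
      [/\ gcdz lam (3 * gam) = 1, gcdz P (3 * gam) = 1 & gcdz P lam = 1],
      [/\ eps0 != 0, del0 != 0 &
          P * lam ^+ 2 * eps0 + 9 * gam ^+ 2 * del0 = 1],
      [/\ 2 * A = P * lam ^+ 2 - 9 * gam ^+ 2,
          B = 2 * P * F0 ^+ 2 * (del0 - eps0 - mu * (P * lam ^+ 2 + 9 * gam ^+ 2))
              + (P * lam ^+ 2 + 9 * gam ^+ 2) * t0 * F0,
          C = 2 * P * F0 ^+ 2 * (del0 + eps0 - mu * (P * lam ^+ 2 - 9 * gam ^+ 2))
              + (P * lam ^+ 2 - 9 * gam ^+ 2) * t0 * F0 &
          2 * D = P * lam ^+ 2 + 9 * gam ^+ 2] &
      [/\ E = F0 * (2 * P * F0 * (eps0 + 9 * mu * gam ^+ 2) - 9 * gam ^+ 2 * t0)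
              * (2 * F0 * (del0 - P * mu * lam ^+ 2) + lam ^+ 2 * t0),
          F = 2 * F0 & G = 3 * lam * gam]].

Definition inCp (p : nat) (s : septuple) : Prop :=
  let: (A, B, C, D, E, F, G) := s in
  [/\ param_form p s, [/\ A1 A B C D E F G p, A3 A B C D E F G p &
      A4 A B C D E F G p], A5 A B C D E F G p, A7 A B C D E F G &
      forall n : nat, (1 <= n)%N -> A6 A B C D E F G n].

Definition infinite_set (P : septuple -> Prop) : Prop :=
  forall l : seq septuple, exists s, P s /\ s \notin l.

Definition SchinzelH : Prop :=
  forall Fs : seq {poly int},
    (forall F, F \in Fs ->
       [/\ (1 < size F)%N,
           irreducible_poly (map_poly (intr : int -> rat) F) &
           0 < lead_coef F]) ->
    (forall q : nat, prime q ->
       exists m : int, ~~ (q%:Z %| \prod_(F <- Fs) F.[m])%Z) ->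
    forall N : int, exists x : int, N < x /\ 0 < x /\
      forall F, F \in Fs -> exists q : nat, prime q /\ F.[x] = q%:Z.

(* Main.v *)
Require Import Defs.
From HB Require Import structures.
From mathcomp Require Import all_boot all_order all_algebra all_fingroup all_solvable all_field.
From mathcomp Require Import zify ring.
Set Implicit Arguments. Unset Strict Implicit. Unset Printing Implicit Defensive.
Import Order.TTheory GRing.Theory Num.Theory.
Local Open Scope ring_scope.

Lemma dvdz_Fp (q : nat) (z : int) : prime q ->
  (q%:Z %| z)%Z = ((z%:~R : 'F_q) == 0).
Proof.
move=> pq; rewrite dvdzE /=.
case: z => n /=.
  by rewrite (dvdn_pcharf (pchar_Fp pq)).
by rewrite NegzE mulrNz oppr_eq0 (dvdn_pcharf (pchar_Fp pq)).
Qed.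

Lemma Fp_fermat p (x : 'F_p) : prime p -> x ^+ p = x.
Proof. by move=> pp; have := expf_card x; rewrite card_Fp. Qed.

Lemma cube1 p (z : 'F_p) : prime p -> p = 2 %[mod 3] -> z ^+ 3 = 1 -> z = 1.
Proof.
move=> pp hp h3.
have hz : z != 0 by apply/eqP => z0; move: h3; rewrite z0 expr0n /= => /eqP; rewrite eq_sym oner_eq0.
have ep : p = (p %/ 3 * 3 + 2)%N by rewrite {1}(divn_eq p 3) hp.
have := Fp_fermat z pp; rewrite [X in z ^+ X]ep exprD mulnC exprM h3 expr1n mul1r.
by rewrite expr2 => h; apply: (mulIf hz); rewrite mul1r.
Qed.

Lemma nonsq_m3 p (w : 'F_p) : prime p -> p = 2 %[mod 3] -> p = 1 %[mod 8] ->
  w ^+ 2 != -3.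
Proof.
move=> pp h3 h8; apply/negP => /eqP hw.
have n2 : (2%:R : 'F_p) != 0.
  by rewrite -(dvdn_pcharf (pchar_Fp pp)) dvdn_prime2 //; apply/eqP => e; move: h8; rewrite e.
have n3 : (3%:R : 'F_p) != 0.
  by rewrite -(dvdn_pcharf (pchar_Fp pp)) dvdn_prime2 //; apply/eqP => e; move: h3; rewrite e.
pose om := (w - 1) / 2%:R.
have : om ^+ 3 = 1.
  apply/eqP; rewrite -subr_eq0.
  have n4 : (4%:R:'F_p) != 0 by rewrite (natrM _ 2 2) mulf_neq0.
  have -> : om ^+ 3 - 1 = (om - 1) * ((-3 + 3%:R) / 4%:R).
    by rewrite /om -hw; field; rewrite n4 n2.
  by rewrite addNr mul0r mulr0.
move/(cube1 pp h3); rewrite /om => /eqP.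
rewrite -subr_eq0 => /eqP h.
have h' : w = 3%:R.
  apply/eqP; rewrite -subr_eq0; apply/eqP.
  have -> : w - 3%:R = ((w - 1) / 2%:R - 1) * 2%:R by field.
  by rewrite h mul0r.
move: hw; rewrite h' => /eqP; rewrite -subr_eq0 -natrX => /eqP.
have -> : (3 ^ 2)%:R - (-3) = (12%:R : 'F_p) by rewrite opprK -natrD.
move/eqP; rewrite -(dvdn_pcharf (pchar_Fp pp)) => h12.
have : p \in primes 12 by rewrite mem_primes pp h12.
by rewrite /= !inE => /orP [] /eqP e; move: h8; rewrite e.
Qed.


Lemma sqrt2_Fp p : prime p -> p = 1 %[mod 8] -> exists s : 'F_p, s ^+ 2 = 2%:R.
Proof.
move=> pp h8.
have ep : p = (p %/ 8 * 8 + 1)%N by rewrite {1}(divn_eq p 8) h8.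
set t := (p %/ 8)%N in ep.
have t0 : (0 < t)%N.
  rewrite lt0n; apply/eqP => t0; move: pp; rewrite ep t0 /=. by [].
pose rs := enum (predC1 (0 : 'F_p)).
have Hall : all (p.-1).-unity_root rs.
  apply/allP => x; rewrite mem_enum /= => hx.
  rewrite unity_rootE; apply/eqP; apply: (mulIf hx); rewrite mul1r -exprSr prednK ?prime_gt0 //.
  exact: Fp_fermat.
have Hsz : (p.-1 <= size rs)%N by rewrite -cardE cardC1 card_Fp.
have := has_prim_root _ Hall (enum_uniq _) Hsz.
case/(_ _)/hasP. by rewrite -ltnS prednK ?prime_gt0 // prime_gt1.
move=> z _ hz.
have ep1 : p.-1 = (t * 8)%N by rewrite ep addn1.
pose x := z ^+ t.
have x8 : x ^+ 8 = 1 by rewrite /x -exprM -ep1 prim_expr_order.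
have x4 : x ^+ 4 = -1.
  have : (x ^+ 4) ^+ 2 == 1 by rewrite -exprM x8.
  rewrite sqrf_eq1 => /orP [/eqP h|/eqP //].
  move: h; rewrite /x -exprM => /eqP; rewrite -(prim_order_dvd hz) ep1 => /dvdn_leq.
  by move/(_ ltac:(lia)); lia.
exists (x - x ^+ 3).
have -> : (x - x ^+ 3) ^+ 2 = x ^+ 2 - 2%:R * x ^+ 4 + x ^+ 4 * x ^+ 2 by ring.
rewrite x4; ring.
Qed.


Definition lamv (m : int) : int := 1 + 6 * m.
Definition kv (d r : int) : int := 2 * d - 1 + 6 * r.
Definition Xv (P e d r : int) : int := 2 * P * e + 9 * kv d r.
Definition Yv (m d r : int) : int := 2 * d - lamv m ^+ 2 * kv d r.
Definition Av (P P2 m : int) : int := P2 - 4 + 6 * P * m * (1 + 3 * m).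

Definition phi (q : nat) (z : int) : 'F_q := z%:~R.
Lemma phiD q a b : phi q (a + b) = phi q a + phi q b. Proof. exact: intrD. Qed.
Lemma phiB q a b : phi q (a - b) = phi q a - phi q b. Proof. exact: intrB. Qed.
Lemma phiN q a : phi q (- a) = - phi q a. Proof. exact: intrN. Qed.
Lemma phiM q a b : phi q (a * b) = phi q a * phi q b. Proof. exact: intrM. Qed.
Lemma phiX q a n : phi q (a ^+ n) = phi q a ^+ n. Proof. exact: rmorphXn. Qed.
Lemma phin q n : phi q n%:R = n%:R. Proof. exact: rmorph_nat. Qed.
Lemma phiZ q n : phi q n%:Z = n%:R. Proof. by rewrite /phi -pmulrn. Qed.
Lemma phi1 q : phi q 1 = 1. Proof. exact: rmorph1. Qed.
Lemma phi0 q : phi q 0 = 0. Proof. exact: rmorph0. Qed.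
Definition phiE := (phiD, phiB, phiN, phiM, phiX, phin, phi1, phi0).

Lemma dvdz_phi (q : nat) (z : int) : prime q -> (q%:Z %| z)%Z = (phi q z == 0).
Proof. exact: dvdz_Fp. Qed.

Lemma Fp_facts p (P2 m e d r : int) (s : 'F_p) :
  prime p -> p = 1 %[mod 8] -> p = 2 %[mod 3] -> s ^+ 2 = 2%:R ->
  p%:Z = 2 * P2 + 1 ->
  p%:Z * lamv m ^+ 2 * e + 9 * d = 1 ->
  phi p (lamv m) = 4%:R / (3%:R * (4%:R + 3%:R * s)) ->
  phi p (kv d r) = 4%:R^-1 ->
  [/\ phi p (Xv p e d r) != 0, phi p (Yv m d r) != 0,
      phi p (3 * lamv m - Xv p e d r * Yv m d r) = 0,
      phi p (lamv m) != 0 &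
      ~ (exists y : 'F_p, y ^+ 2 = phi p (Av p P2 m) + phi p (p%:Z * Yv m d r - Xv p e d r))].
Proof.
move=> pp h8 h3 hs hP hB hl hk.
have n2 : (2%:R : 'F_p) != 0.
  by rewrite -(dvdn_pcharf (pchar_Fp pp)) dvdn_prime2 //; apply/eqP => e'; move: h8; rewrite e'.
have n3 : (3%:R : 'F_p) != 0.
  by rewrite -(dvdn_pcharf (pchar_Fp pp)) dvdn_prime2 //; apply/eqP => e'; move: h3; rewrite e'.
have n4 : (4%:R:'F_p) != 0 by rewrite (natrM _ 2 2) mulf_neq0.
have n9 : (9%:R:'F_p) != 0 by rewrite (natrM _ 3 3) mulf_neq0.
have hp0 : phi p p%:Z = 0 by rewrite phiZ pchar_Fp_0.
have nu : (4%:R + 3%:R * s : 'F_p) != 0.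
  apply/eqP => hu; move/eqP: n2; apply.
  transitivity (9%:R * s ^+ 2 - 16%:R : 'F_p); first by rewrite hs; ring.
  transitivity (- ((4%:R + 3%:R * s) * (4%:R - 3%:R * s)) : 'F_p); first by ring.
  by rewrite hu mul0r oppr0.
have hd : phi p d = 9%:R^-1.
  have := congr1 (phi p) hB.
  rewrite !phiE hp0 !mul0r add0r => h9.
  by apply: (mulfI n9); rewrite h9 mulfV.
have hX : phi p (Xv p e d r) = 9%:R / 4%:R.
  by rewrite /Xv; move: (kv d r) hk => K hk; rewrite !phiE hp0 hk; ring.
have hY : phi p (Yv m d r) = 2%:R / 9%:R - (4%:R / (3%:R * (4%:R + 3%:R * s)))^+2 / 4%:R.
  by rewrite /Yv; move: (kv d r) (lamv m) hk hl => K L hk hl; rewrite !phiE hl hk hd; ring.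
have hu2 : (4%:R + 3%:R * s) ^+ 2 - 8%:R * (4%:R + 3%:R * s) - 2%:R = 0 :> 'F_p.
  transitivity (9%:R * s ^+ 2 - 18%:R : 'F_p); first by ring.
  by rewrite hs; ring.
have hE : phi p (Xv p e d r) * phi p (Yv m d r) = 3%:R * (4%:R / (3%:R * (4%:R + 3%:R * s))).
  rewrite hX hY; apply/eqP; rewrite -subr_eq0; apply/eqP.
  transitivity (((4%:R + 3%:R * s) ^+ 2 - 8%:R * (4%:R + 3%:R * s) - 2%:R) / (2%:R * (4%:R + 3%:R * s) ^+ 2) : 'F_p).
    by field; rewrite nu n2 n3 n4 n9.
  by rewrite hu2 mul0r.
have nl : 4%:R / (3%:R * (4%:R + 3%:R * s)) != 0 :> 'F_p.
  by rewrite mulf_neq0 // invr_neq0 // mulf_neq0.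
have nE : phi p (Xv p e d r) * phi p (Yv m d r) != 0 by rewrite hE mulf_neq0.
split.
- by apply: contraNneq nE => ->; rewrite mul0r.
- by apply: contraNneq nE => ->; rewrite mulr0.
- by rewrite phiB !phiM hE hl phin subrr.
- by rewrite hl.
have hP2 : phi p P2 = - 2%:R^-1.
  have := congr1 (phi p) hP; rewrite hp0 !phiE => h0.
  apply: (mulfI n2); rewrite mulrN mulfV // -[RHS]add0r h0; ring.
have hAB : phi p (Av p P2 m) + phi p (p%:Z * Yv m d r - Xv p e d r) = - (27%:R / 4%:R).
  rewrite /Av; move: (Yv m d r) (Xv p e d r) hX => Y X hX.
  by rewrite !phiE hp0 hP2 hX; field; rewrite ?n2 ?n4.

rewrite hAB => -[y hy].
apply: (negP (nonsq_m3 (2%:R * y / 3%:R) pp h3 h8)); apply/eqP.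
transitivity (4%:R / 9%:R * y ^+ 2 : 'F_p); first by field; rewrite ?n9 ?n3.
by rewrite hy; field; rewrite ?n9 ?n4.
Qed.


Lemma Fq0 q n : prime q -> (q %| n)%N -> (n%:R : 'F_q) = 0.
Proof. by move=> pq h; apply/eqP; rewrite -(dvdn_pcharf (pchar_Fp pq)). Qed.
Lemma Fqn0 q n : prime q -> ~~ (q %| n)%N -> (n%:R : 'F_q) != 0.
Proof. by move=> pq h; rewrite -(dvdn_pcharf (pchar_Fp pq)). Qed.

Lemma F3_facts p (P2 m e d r : int) :
  prime p -> p = 2 %[mod 3] ->
  p%:Z = 2 * P2 + 1 ->
  p%:Z * lamv m ^+ 2 * e + 9 * d = 1 ->
  [/\ phi 3 (Xv p e d r) != 0, phi 3 (Yv m d r) != 0,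
      phi 3 (Av p P2 m + (p%:Z * Yv m d r - Xv p e d r)) != 0 &
      phi 3 (lamv m) != 0].
Proof.
move=> pp h3 hP hB.
have t3 : (3%:R : 'F_3) = 0 by apply: Fq0.
have n2 : (2%:R : 'F_3) != 0 by apply: Fqn0.
have n1 : (1 : 'F_3) != 0 by apply: (Fqn0 (n := 1)).
have hp : phi 3 p%:Z = 2%:R by rewrite phiZ -Fp_nat_mod // h3.
have hl : phi 3 (lamv m) = 1.
  rewrite /lamv !phiE; transitivity (1 + 3%:R * (2%:R * phi 3 m) : 'F_3); first by ring.
  by rewrite t3 mul0r addr0.
have he : 2%:R * phi 3 e = 1.
  have := congr1 (phi 3) hB; move: (lamv m) hl => L hl; rewrite !phiE hp hl => h.
  by rewrite -[RHS]h (natrM _ 3 3) t3 !mul0r addr0 expr1n mulr1.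
have hP2 : 2%:R * phi 3 P2 = 1.
  have := congr1 (phi 3) hP; rewrite !phiE hp => h.
  transitivity ((2%:R * phi 3 P2 + 1) - 1 : 'F_3); first by ring.
  by rewrite -h; ring.
have hk : phi 3 (kv d r) = 2%:R * phi 3 d - 1.
  rewrite /kv !phiE; transitivity (2%:R * phi 3 d - 1 + 3%:R * (2%:R * phi 3 r) : 'F_3); first by ring.
  by rewrite t3 mul0r addr0.
have hX : phi 3 (Xv p e d r) = 2%:R.
  rewrite /Xv; move: (kv d r) hk => K hk; rewrite !phiE hp hk.
  transitivity (2%:R * (2%:R * phi 3 e) + 3%:R * (6%:R * phi 3 d - 3%:R) : 'F_3); first by ring.
  by rewrite he t3 mul0r addr0 mulr1.
have hY : phi 3 (Yv m d r) = 1.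
  rewrite /Yv; move: (kv d r) (lamv m) hk hl => K L hk hl; rewrite !phiE hk hl; ring.
have hA : phi 3 (Av p P2 m) = 1.
  rewrite /Av !phiE hp.
  transitivity (2%:R * (2%:R * phi 3 P2) - 1 + 3%:R * (4%:R * phi 3 m * (1 + 3%:R * phi 3 m) - phi 3 P2 - 1) : 'F_3); first by ring.
  by rewrite hP2 t3 mul0r addr0 mulr1; ring.
split.
- by rewrite hX.
- by rewrite hY.
- move: (Av p P2 m) (Yv m d r) (Xv p e d r) hA hX hY => A Y X hA hX hY.
  rewrite !phiE hA hX hY hp.
  have -> : 1 + (2%:R * 1 - 2%:R) = (1 : 'F_3) by ring.
  exact: n1.
- by rewrite hl.
Qed.

Lemma F2_facts (p m e d r : int) :
  [/\ phi 2 (Xv p e d r) != 0, phi 2 (Yv m d r) != 0 & phi 2 (lamv m) != 0].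
Proof.
have t2 : (2%:R : 'F_2) = 0 by apply: Fq0.
have n1 : (1 : 'F_2) != 0 by apply: (Fqn0 (n := 1)).
have hl : phi 2 (lamv m) = 1.
  rewrite /lamv !phiE; transitivity (1 + 2%:R * (3%:R * phi 2 m) : 'F_2); first by ring.
  by rewrite t2 mul0r addr0.
have hk : phi 2 (kv d r) = 1.
  rewrite /kv !phiE; transitivity (1 + 2%:R * (phi 2 d - 1 + 3%:R * phi 2 r) : 'F_2); first by ring.
  by rewrite t2 mul0r addr0.
have hX : phi 2 (Xv p e d r) = 1.
  rewrite /Xv; move: (kv d r) hk => K hk; rewrite !phiE hk.
  transitivity (1 + 2%:R * (phi 2 p * phi 2 e + 4%:R) : 'F_2); first by ring.
  by rewrite t2 mul0r addr0.
have hY : phi 2 (Yv m d r) = 1.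
  rewrite /Yv; move: (kv d r) (lamv m) hk hl => K L hk hl; rewrite !phiE hk hl.
  transitivity (1 + 2%:R * (phi 2 d - 1) : 'F_2); first by ring.
  by rewrite t2 mul0r addr0.
by rewrite hX hY hl.
Qed.


Lemma Euclidz (l : nat) (a b : int) : prime l ->
  (l%:Z %| a * b)%Z = (l%:Z %| a)%Z || (l%:Z %| b)%Z.
Proof. by move=> pl; rewrite !dvdzE abszM Euclid_dvdM. Qed.

Lemma zero2 (x c1 c2 r1 r2 : int) : r1 = 0 -> r2 = 0 -> x = c1 * r1 + c2 * r2 -> x = 0.
Proof. by move=> -> -> ->; rewrite !mulr0 addr0. Qed.

Definition sept (P P2 m e d r : int) : septuple :=
  (Av P P2 m, P * Yv m d r - Xv P e d r, P * Yv m d r + Xv P e d r,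
   Av P P2 m + 9, Xv P e d r * Yv m d r, 2, 3 * lamv m).

Lemma vZ_le2 (l q1 q2 : nat) : prime q1 -> prime q2 ->
  (vZ l (q1%:Z * - q2%:Z) <= 2)%R.
Proof.
move=> p1 p2; rewrite /vZ abszM abszN /= lognM ?prime_gt0 // !logn_prime //.
by rewrite lez_nat; case: (l == q1); case: (l == q2).
Qed.

Lemma vZ_ge0 l z : (0 <= vZ l z)%R.
Proof. by rewrite /vZ. Qed.

Lemma sept_good p n (P2 m e d r : int) (s : 'F_p) (q1 q2 : nat) :
  prime p -> p = 1 %[mod 8] -> p = 2 %[mod 3] -> s ^+ 2 = 2%:R ->
  p%:Z = 2 * P2 + 1 ->
  p%:Z * lamv m ^+ 2 * e + 9 * d = 1 ->
  phi p (lamv m) = 4%:R / (3%:R * (4%:R + 3%:R * s)) ->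
  phi p (kv d r) = 4%:R^-1 ->
  prime q1 -> prime q2 -> Xv p e d r = q1%:Z -> Yv m d r = - q2%:Z ->
  (0 < n)%N ->
  inCp p (sept p P2 m e d r) /\ HypFM p n (sept p P2 m e d r).
Proof.
move=> pp h8 h3 hs hP hB hl hk pq1 pq2 hXq hYq n0.
have [fX fY fGE fl fsq] := Fp_facts pp h8 h3 hs hP hB hl hk.
have [gX gY gAB gl] := F3_facts r pp h3 hP hB.
have [tX tY tl] := F2_facts p m e d r.
have hB0 : p%:Z * lamv m ^+ 2 * e + 9 * d - 1 = 0 by rewrite hB subrr.
have hrel : lamv m ^+ 2 * Xv p e d r + 9 * Yv m d r - 2 = 0.
  apply: (zero2 (c1 := 2) (c2 := 0) hB0 (erefl (0:int))).
  by rewrite /Xv /Yv; ring.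
have hA2 : 2 * Av p P2 m + 9 - p%:Z * lamv m ^+ 2 = 0.
  by rewrite /Av /lamv hP; ring.
have lam0 : lamv m != 0 by apply/eqP => h0; move: tl; rewrite h0 phi0 eqxx.
have PF : param_form p (sept p P2 m e d r).
  rewrite /param_form /sept.
  exists (lamv m), 1, e, d, 0, (- kv d r), 1.
  split.
  - split => //.
    by move: tl; rewrite -dvdz_phi // dvdzE /= dvdn2 negbK.
  - split.
    + by apply/eqP/coprimezP; exists (1, -2 * m); rewrite /lamv /=; ring.
    + apply/eqP/coprimezP; exists (-1, (p %/ 3)%:Z + 1) => /=.
      have hp3 : p%:Z = (p %/ 3)%:Z * 3 + 2 by rewrite {1}(divn_eq p 3) h3.
      by rewrite hp3; ring.
    + apply/eqP; change (coprimez p%:Z (lamv m)); rewrite coprimezE /= prime_coprime //.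
      by move: fl; rewrite -dvdz_phi.
  - split.
    + apply/eqP => e0; move: hB; rewrite e0 mulr0 add0r.
      move/(congr1 (phi 3)); rewrite !phiE (natrM _ 3 3) (Fq0 (n:=3)) // !mul0r.
    + apply/eqP => d0; move: hB; rewrite d0 mulr0 addr0.
      by move/(congr1 (phi p)); rewrite !phiE phiZ pchar_Fp_0.
    + by rewrite expr1n mulr1.
  - split; try by rewrite /Av /lamv hP; ring.
    + by rewrite /Yv /Xv; ring.
    + by rewrite /Yv /Xv; ring.
  - split; try by rewrite /Yv /Xv; ring.
rewrite /inCp /HypFM /sept /=.
move: PF; rewrite /sept => PF.
move: PF hXq hYq fX fY fGE fl fsq gX gY gAB gl tX tY tl hrel hA2 lam0 hB0.
move: (Xv p e d r) (Yv m d r) (Av p P2 m) (lamv m) => X Y A L.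
move=> PF hXq hYq fX fY fGE fl fsq gX gY gAB gl tX tY tl hrel hA2 lam0 hB0.
set P := p%:Z.
have hA1 : A1 A (P * Y - X) (P * Y + X) (A + 9) (X * Y) 2 (3 * L) p.
  rewrite /A1; split.
  - by ring.
  - by apply: (zero2 (c1 := -2 * X) (c2 := -2 * P) hA2 hrel); ring.
  - by apply: (zero2 (c1 := -9) (c2 := 0) hA2 hrel); ring.
have cop : gcdz A (A + 9) = 1.
  apply/eqP/coprimezP; exists (e - d, e + d) => /=.
  apply/eqP; rewrite -subr_eq0; apply/eqP.
  by apply: (zero2 (c1 := e) (c2 := 1) hA2 hB0); ring.
have hA3 : A3 A (P * Y - X) (P * Y + X) (A + 9) (X * Y) 2 (3 * L) p.
  split.
  - by rewrite cop gcd1z.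
  - by rewrite dvdz_phi // phiM mulf_neq0.
  - rewrite dvdz_phi //; move/eqP: fGE; rewrite phiB subr_eq0 => /eqP ->.
    by rewrite phiM mulf_neq0.
have hA4 : A4 A (P * Y - X) (P * Y + X) (A + 9) (X * Y) 2 (3 * L) p.
  move=> l pl ol l3 lp; rewrite !dvdz_gcd => /andP [/andP [h1 h2] h3']; exfalso.
  have e1 : A * (P * Y + X) - (P * Y - X) * (A + 9) = 2 * P * (L ^+ 2 * X - 1).
    apply/eqP; rewrite -subr_eq0; apply/eqP.
    by apply: (zero2 (c1 := X) (c2 := - P) hA2 hrel); ring.
  have n2 : ~~ (l%:Z %| 2)%Z.
    rewrite dvdzE /= dvdn_prime2 //; apply/eqP => l2; move: ol; rewrite l2.
    by [].
  have nP : ~~ (l%:Z %| P)%Z by rewrite dvdzE /= dvdn_prime2.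
  have n3 : ~~ (l%:Z %| 3)%Z by rewrite dvdzE /= dvdn_prime2.
  have hlx : (l%:Z %| L ^+ 2 * X - 1)%Z.
    move: h1; rewrite e1 !Euclidz //.
    by rewrite (negbTE n2) (negbTE nP).
  have e2 : (A + 9) * (X * Y) - (P * Y + X) * 2 - (A * (X * Y) - (P * Y - X) * 2)
            = - (3 * X) - X * (L ^+ 2 * X - 1).
    apply/eqP; rewrite -subr_eq0; apply/eqP.
    by apply: (zero2 (c1 := 0) (c2 := X) hA2 hrel); ring.
  have h23 := rpredB h2 h3'; rewrite e2 in h23.
  have h3X : (l%:Z %| 3 * X)%Z.
    have -> : 3 * X = - (- (3 * X) - X * (L ^+ 2 * X - 1)) - X * (L ^+ 2 * X - 1) by ring.
    by rewrite rpredB ?rpredN // dvdz_mull.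
  move: h3X; rewrite Euclidz // (negbTE n3) /= => hX.
  have : (l%:Z %| L ^+ 2 * X - (L ^+ 2 * X - 1))%Z by rewrite rpredB // dvdz_mull.
  rewrite (_ : L ^+ 2 * X - (L ^+ 2 * X - 1) = 1); last by ring.
  by rewrite dvdz1 /=; apply/negP; rewrite neq_ltn prime_gt1 ?orbT.
have hA5 : A5 A (P * Y - X) (P * Y + X) (A + 9) (X * Y) 2 (3 * L) p.
  exists 1; split.
    by rewrite dvdz_phi // expr1n mulr1 fGE.
  move=> z z3; rewrite (cube1 pp h3 z3).
  change (qnrFp (phi p A + 1 * phi p (P * Y - X) * phi p 1 ^+ 4)).
  rewrite phi1 expr1n mul1r mulr1; split => //.
  by apply/eqP => h0; apply: fsq; exists 0; rewrite h0 expr0n.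
have hA7 : A7 A (P * Y - X) (P * Y + X) (A + 9) (X * Y) 2 (3 * L).
  split.
  - by rewrite (dvdz_phi _ (q := 3)).
  - by rewrite dvdz_mulr.
have hv : forall (l : nat) (n' : nat), (1 <= n')%N ->
    vZ l (X * Y) - vZ l (3 * L) < (6 * n')%N%:Z.
  move=> l n' hn.
  have h6 : (2 < (6 * n')%N%:Z)%R by rewrite ltz_nat; apply: (@leq_trans 6) => //; exact: leq_pmulr.
  have a : (vZ l (X * Y) <= 2)%R by rewrite hXq hYq; exact: vZ_le2.
  have b := vZ_ge0 l (3 * L).
  apply: le_lt_trans h6; rewrite lerBlDr; apply: le_trans a _; rewrite lerDl //.
split.
  split; [exact: PF | by split | exact: hA5 | exact: hA7 | by move=> n' hn; apply: hv].
split; [ | by split; [exact: hA1 | move=> l *; right; exact: hv | exact: hA3]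
       | exact: hA4 | exact: hA5 | by move=> _; split; [apply: hv | exact: hA7]].
by case=> _ _ /eqP.
Qed.


Lemma size2_irr (F : fieldType) (f : {poly F}) : size f = 2%N -> irreducible_poly f.
Proof.
move=> s2; split; first by rewrite s2.
move=> q nq1 dq.
have f0 : f != 0 by rewrite -size_poly_eq0 s2.
have q0 : q != 0 by apply/eqP => q0; move: dq; rewrite q0 dvd0p (negbTE f0).
have := dvdp_leq f0 dq; rewrite s2 => hq.
rewrite -(dvdp_size_eqp dq) s2.
move: nq1 hq; rewrite -size_poly_eq0 in q0.
by case: (size q) q0 => [|[|[|]]].
Qed.

Lemma linpoly_ok (a b : int) : 0 < a ->
  [/\ (1 < size (a *: 'X + b%:P)%R)%N,
      irreducible_poly (map_poly (intr : int -> rat) (a *: 'X + b%:P)) &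
      0 < lead_coef (a *: 'X + b%:P)].
Proof.
move=> a0.
have a0' : a != 0 by rewrite gt_eqF.
have sz : size (a *: 'X + b%:P) = 2%N.
  by rewrite size_polyDl size_scale // size_polyX // (leq_ltn_trans (size_polyC_leq1 b)).
split.
- by rewrite sz.
- apply: size2_irr; rewrite size_map_inj_poly //; last exact: intr_inj.
- rewrite lead_coefDl ?lead_coefZ ?lead_coefX ?mulr1 //.
  by rewrite size_scale // size_polyX (leq_ltn_trans (size_polyC_leq1 b)).
Qed.

Lemma lin_nofix (a1 b1 a2 b2 : int) (q : nat) : prime q ->
  ~ ((q%:Z %| a1)%Z /\ (q%:Z %| 2 * b1)%Z) ->
  ~ ((q%:Z %| a2)%Z /\ (q%:Z %| 2 * b2)%Z) ->
  exists x : int, ~~ (q%:Z %| (b1 * x + a1) * (b2 * x + a2))%Z.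
Proof.
move=> pq H1 H2.
have pair : forall a b : int, ~ ((q%:Z %| a)%Z /\ (q%:Z %| 2 * b)%Z) ->
   [/\ ~ ((q%:Z %| b * 0 + a)%Z /\ (q%:Z %| b * 1 + a)%Z),
       ~ ((q%:Z %| b * 0 + a)%Z /\ (q%:Z %| b * 2 + a)%Z) &
       ~ ((q%:Z %| b * 1 + a)%Z /\ (q%:Z %| b * 2 + a)%Z)].
  move=> a b H; split => -[u v]; apply: H.
  - move: u v; rewrite mulr0 add0r mulr1 => u v; split => //.
    have -> : 2 * b = 2 * ((b + a) - a) by ring.
    by rewrite dvdz_mull // rpredB.
  - move: u v; rewrite mulr0 add0r => u v; split => //.
    have -> : 2 * b = (b * 2 + a) - a by ring.
    by rewrite rpredB.
  - have hb : (q%:Z %| b)%Z.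
      have -> : b = (b * 2 + a) - (b * 1 + a) by ring.
      by rewrite rpredB.
    split; last by rewrite dvdz_mull.
    have -> : a = (b * 1 + a) - b by ring.
    by rewrite rpredB.
have [P1 P2 P3] := pair _ _ H1.
have [Q1 Q2 Q3] := pair _ _ H2.
pose f x := (b1 * x + a1) * (b2 * x + a2).
case: (boolP (q%:Z %| f 0)%Z) => [h0|]; last by exists 0.
case: (boolP (q%:Z %| f 1)%Z) => [h1|]; last by exists 1.
case: (boolP (q%:Z %| f 2)%Z) => [h2|]; last by exists 2.
exfalso; move: h0 h1 h2; rewrite /f !Euclidz // => /orP[u0|v0] /orP[u1|v1] /orP[u2|v2];
  first [ apply: P1; split; assumption | apply: P2; split; assumption
        | apply: P3; split; assumption | apply: Q1; split; assumption
        | apply: Q2; split; assumption | apply: Q3; split; assumption ].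
Qed.

Lemma list_bound (lst : seq septuple) : exists b : int, (0 <= b) /\
  (forall s, s \in lst -> `|s.1.1.1.1.2 - s.1.1.1.1.1.2| <= b).
Proof.
elim: lst => [|a l [b [b0 hb]]]; first by exists 0.
exists (`|a.1.1.1.1.2 - a.1.1.1.1.1.2| + b); split; first by rewrite addr_ge0.
move=> s; rewrite inE => /orP [/eqP ->|/hb h]; first by rewrite lerDl.
by apply: le_trans h _; rewrite lerDr.
Qed.



Lemma ndvd_small p k : prime p -> p = 1 %[mod 8] -> (0 < k < 9)%N -> ~~ (p %| k)%N.
Proof.
move=> pp h8 /andP [k0 k9]; apply/negP => /(dvdn_leq k0) pk.
have p1 := prime_gt1 pp.
have p8 : p = 1%N by lia.
by rewrite p8 in pp.
Qed.

Lemma bigx (X0 a b x P : int) : (0 <= b)%R -> (1 <= P)%R -> (- a <= X0)%R -> (a + b < x)%R -> (0 <= a)%R ->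
  (b < 2 * (X0 + 54 * P * x))%R.
Proof. move=> h1 h2 h3 h4 h5.
have h6 : (0 <= (P - 1) * x)%R by rewrite mulr_ge0 // ?subr_ge0 //; lia.
lia. Qed.

Lemma phi_rep p (z : 'F_p) : prime p -> phi p (nat_of_ord z)%:Z = z.
Proof. by move=> pp; rewrite phiZ natr_Zp. Qed.

Theorem corollary9p6 :
  SchinzelH ->
  forall p : nat, prime p -> p = 1 %[mod 8] -> p = 2 %[mod 3] ->
  forall n : nat, (0 < n)%N ->
    infinite_set (fun s => inCp p s /\ HypFM p n s).
Proof.
move=> SH p pp h8 h3 n n0 lst.
have [s hs] := sqrt2_Fp pp h8.
have n6 : (6%:R : 'F_p) != 0 by apply: Fqn0 => //; apply: ndvd_small.
have n4 : (4%:R : 'F_p) != 0 by apply: Fqn0 => //; apply: ndvd_small.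
pose tgt : 'F_p := 4%:R / (3%:R * (4%:R + 3%:R * s)).
pose m : int := (nat_of_ord ((tgt - 1) / 6%:R))%:Z.
have hl : phi p (lamv m) = tgt.
  by rewrite /lamv phiD phiM phi1 phin phi_rep //; field.
have hp3 : p%:Z = (p %/ 3)%:Z * 3 + 2 by rewrite {1}(divn_eq p 3) h3.
have c1 : coprimez (lamv m) 3.
  by apply/coprimezP; exists (1, -2 * m); rewrite /lamv /=; ring.
have c2 : coprimez p%:Z 3.
  by apply/coprimezP; exists (-1, (p %/ 3)%:Z + 1); rewrite /= hp3; ring.
have cop : coprimez (p%:Z * lamv m ^+ 2) 9.
  have -> : (9 : int) = 3 ^+ 2 by [].
  by rewrite coprimez_pexpr // coprimezMl c2 /= coprimez_pexpl.
have [u [v huv]] := Bezoutz (p%:Z * lamv m ^+ 2) 9.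
rewrite (eqP cop) in huv.
have hB : p%:Z * lamv m ^+ 2 * u + 9 * v = 1 by rewrite -[RHS]huv; ring.
pose P2 : int := (p %/ 8 * 4)%N%:Z.
have hP : p%:Z = 2 * P2 + 1.
  have e8 : p = (p %/ 8 * 8 + 1)%N by rewrite {1}(divn_eq p 8) h8.
  rewrite /P2 {1}e8; lia.
pose r0 : int := (nat_of_ord ((4%:R^-1 - phi p (2 * v - 1)) / 6%:R))%:Z.
have hk : forall x, phi p (kv v (r0 + p%:Z * x)) = 4%:R^-1.
  by move=> x; rewrite /kv /r0 !phiE phi_rep // phiZ pchar_Fp_0 //; field; rewrite ?n4 ?n6.
have hk0 : phi p (kv v r0) = 4%:R^-1.
  by rewrite /kv /r0 !phiE phi_rep //; field; rewrite ?n4 ?n6.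
have [fX fY _ _ _] := Fp_facts pp h8 h3 hs hP hB hl hk0.
have [gX gY _ _] := F3_facts r0 pp h3 hP hB.
have [tX tY tl] := F2_facts p m u v r0.
have hB0 : p%:Z * lamv m ^+ 2 * u + 9 * v - 1 = 0 by rewrite hB subrr.
have rel0 : lamv m ^+ 2 * Xv p u v r0 + 9 * Yv m v r0 - 2 = 0.
  apply: (zero2 (c1 := 2) (c2 := 0) hB0 (erefl (0:int))).
  by rewrite /Xv /Yv; ring.
have lam0 : lamv m != 0.
  by apply/eqP => h0; move: tl; rewrite h0 phi0 eqxx.
pose X0 := Xv p u v r0.
pose Y0 := Yv m v r0.
pose f1 : {poly int} := (54 * p%:Z) *: 'X + X0%:P.
pose f2 : {poly int} := (6 * p%:Z * lamv m ^+ 2) *: 'X + (- Y0)%:P.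
have ev1 : forall x, f1.[x] = Xv p u v (r0 + p%:Z * x).
  by move=> x; rewrite /f1 hornerD hornerZ hornerX hornerC /X0 /Xv /kv; ring.
have ev2 : forall x, f2.[x] = - Yv m v (r0 + p%:Z * x).
  by move=> x; rewrite /f2 hornerD hornerZ hornerX hornerC /Y0 /Yv /kv; ring.
have p0 : (0 < p%:Z) by rewrite ltz_nat prime_gt0.
have q23 : forall q : nat, prime q -> (q %| 108)%N || (q %| 12)%N -> q = 2%N \/ q = 3%N.
  move=> q pq /orP [] h.
    have : q \in primes 108 by rewrite mem_primes pq h.
    by rewrite (_ : primes 108 = [:: 2; 3]%N) // !inE => /orP [] /eqP ->; auto.
  have : q \in primes 12 by rewrite mem_primes pq h.
  by rewrite (_ : primes 12 = [:: 2; 3]%N) // !inE => /orP [] /eqP ->; auto.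
have qp : forall q : nat, prime q -> (q%:Z %| p%:Z)%Z -> q = p.
  by move=> q pq; rewrite dvdzE /= dvdn_prime2 // => /eqP.
have C1 : forall q : nat, prime q ->
    ~ ((q%:Z %| X0)%Z /\ (q%:Z %| 2 * (54 * p%:Z))%Z).
  move=> q pq [hX h2].
  have : (q%:Z %| 108 * p%:Z)%Z by rewrite (_ : 108 * p%:Z = 2 * (54 * p%:Z)) //; ring.
  rewrite Euclidz // => /orP [h108|hp].
    have [] := q23 q pq; first by rewrite -(dvdzE q%:Z 108) h108.
      by move=> q2; move: hX tX; rewrite q2 dvdz_phi // => /eqP ->; rewrite eqxx.
    by move=> q3; move: hX gX; rewrite q3 dvdz_phi // => /eqP ->; rewrite eqxx.
  by move: hX fX; rewrite (qp q pq hp) dvdz_phi // => /eqP ->; rewrite eqxx.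
have C2 : forall q : nat, prime q ->
    ~ ((q%:Z %| - Y0)%Z /\ (q%:Z %| 2 * (6 * p%:Z * lamv m ^+ 2))%Z).
  move=> q pq [hY h2]; rewrite rpredN in hY.
  have hY2 : q = 2%N -> False.
    by move=> q2; move: hY tY; rewrite q2 dvdz_phi // => /eqP ->; rewrite eqxx.
  have hY3 : q = 3%N -> False.
    by move=> q3; move: hY gY; rewrite q3 dvdz_phi // => /eqP ->; rewrite eqxx.
  move: h2; rewrite (_ : 2 * (6 * p%:Z * lamv m ^+ 2) = (12 * p%:Z) * (lamv m * lamv m)); last by ring.
  rewrite !Euclidz // orbb => /orP [/orP [h12|hp]|hl'].
  - have [] := q23 q pq; first by rewrite -(dvdzE q%:Z 12) h12 orbT.
      exact: hY2.
    exact: hY3.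
  - by move: hY fY; rewrite (qp q pq hp) dvdz_phi // => /eqP ->; rewrite eqxx.
  - apply: hY2.
    have : (q%:Z %| lamv m ^+ 2 * X0 + 9 * Y0)%Z by apply: rpredD; [apply: dvdz_mulr; rewrite expr2; exact: dvdz_mulr | exact: dvdz_mull].
    rewrite (_ : lamv m ^+ 2 * X0 + 9 * Y0 = 2); last first.
      by apply/eqP; rewrite -subr_eq0; apply/eqP; exact: rel0.
    by rewrite dvdzE /= dvdn_prime2 // => /eqP.
have [b [b0 hb]] := list_bound lst.
have polyok : forall F, F \in [:: f1; f2] ->
   [/\ (1 < size F)%N, irreducible_poly (map_poly (intr : int -> rat) F) & 0 < lead_coef F].
  move=> F; rewrite !inE => /orP [] /eqP -> ; apply: linpoly_ok.
    by rewrite mulr_gt0.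
  rewrite mulr_gt0 ?mulr_gt0 // exprn_even_gt0 //.
have nofix : forall q : nat, prime q ->
    exists m0 : int, ~~ (q%:Z %| \prod_(F <- [:: f1; f2]) F.[m0])%Z.
  move=> q pq.
  have [x hx] := lin_nofix pq (C1 q pq) (C2 q pq); exists x.
  by rewrite big_cons big_cons big_nil mulr1 !hornerD !hornerZ !hornerX !hornerC.
have [x [Nx [x0 hx]]] := SH [:: f1; f2] polyok nofix (`|X0| + b).
have [q1 [pq1 e1]] := hx f1 (mem_head _ _).
have [q2 [pq2 e2]] : exists q : nat, prime q /\ f2.[x] = q%:Z.
  by apply: hx; rewrite !inE eqxx orbT.
rewrite ev1 in e1; rewrite ev2 in e2.
have hY : Yv m v (r0 + p%:Z * x) = - q2%:Z by rewrite -e2 opprK.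
have G := sept_good pp h8 h3 hs hP hB hl (hk x) pq1 pq2 e1 hY n0.
exists (sept p P2 m u v (r0 + p%:Z * x)); split; first exact: G.
apply/negP => hin; have := hb _ hin; rewrite /sept /=.
set XX := Xv p u v (r0 + p%:Z * x).
have eX : XX = X0 + 54 * p%:Z * x by rewrite /XX /X0 /Xv /kv; ring.
rewrite (_ : p%:Z * Yv m v (r0 + p%:Z * x) + XX - (p%:Z * Yv m v (r0 + p%:Z * x) - XX) = 2 * (X0 + 54 * p%:Z * x)); last by rewrite eX; ring.
move=> hle.
have p1 : (1 <= p%:Z) by rewrite lez_nat prime_gt0.
have hbig := bigx b0 p1 (lerNnormlW (lexx `|X0|)) Nx (normr_ge0 X0).
by have := le_lt_trans (le_trans (ler_norm _) hle) hbig; rewrite ltxx.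
Qed.
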